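(* Let $d\geq 3$ and $n\geq 6$ be integers, and let $r$ be an integer. If $r<d+n$, then a general form of degree $d$ in $n+1$ variables has no apolar star configuration $\mathbb{X}(r)\subset\mathbb{P}^n$. If $r\geq d+n$, then a general form of degree $d$ in $n+1$ variables has an apolar star configuration $\mathbb{X}(r)$.
   Context: Let $S=\mathbb{C}[x_0,\dots,x_n]$ and $T=\mathbb{C}[y_0,\dots,y_n]$, where $T$ acts on $S$ by differentiation, $y_j=\partial/\partial x_j$. For a form $F\in S$, $F^\perp=\{\partial\in T:\partial F=0\}$. A finite set of points $\mathbb{X}\subset\mathbb{P}^n=\mathbb{P}(S_1)$ with defining ideal $I(\mathbb{X})\subseteq T$ is apolar to $F$ if $I(\mathbb{X})\subseteq F^\perp$. A star configuration $\mathbb{X}(r)\subset\mathbb{P}^n$: take $r$ linear forms $l_1,\dots,l_r\in T_1$ such that any $n+1$ of them are linearly independent; $\mathbb{X}(r)$ is the set of $\binom{r}{n}$ points obtained by intersecting the hyperplanes $\{l_i=0\}$ $n$ at a time in all possible ways. ''A general form has (resp. has no) apolar $\mathbb{X}(r)$'' means that all forms in some nonempty Zariski open subset of degree $d$ forms have (resp. have no) apolar star configuration $\mathbb{X}(r)$. *)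

(* Defs.v *)
From HB Require Import structures.
From mathcomp Require Import all_boot all_order all_algebra.
From mathcomp Require Import reals complex.
From mathcomp Require Import mpoly.

Set Implicit Arguments.
Unset Strict Implicit.
Unset Printing Implicit Defensive.

Import Order.TTheory GRing.Theory Num.Theory.
Local Open Scope ring_scope.

(* Both S = C[x_0..x_n] and T = C[y_0..y_n] are modelled by {mpoly C[n.+1]};
   the variable index i : 'I_n.+1 stands for x_i (in S) resp. y_i (in T). *)

Section Apolarity.
Variable (C : fieldType) (n : nat).

(* Action of T on S by differentiation: y_j acts as d/dx_j, so the monomial
   y^m acts as the iterated partial derivative d^m/dx^m, extended linearly. *)
Definition diff_act (D F : {mpoly C[n]}) : {mpoly C[n]} :=
  \sum_(m <- msupp D) D@_m *: F^`M[m].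

Definition perp (F : {mpoly C[n]}) : {mpoly C[n]} -> Prop :=
  fun D => diff_act D F = 0.

(* A point of P^n = P(S_1) is represented by a nonzero coordinate vector
   v : 'I_n -> C (the linear form sum_j v_j x_j); a set of points by a set
   of such representatives. *)
Definition vanishing_ideal (X : ('I_n -> C) -> Prop) : {mpoly C[n]} -> Prop :=
  fun D => forall (e : nat) (v : 'I_n -> C), X v -> (pihomog mdeg e D).@[v] = 0.

Definition apolar (X : ('I_n -> C) -> Prop) (F : {mpoly C[n]}) : Prop :=
  forall D, vanishing_ideal X D -> perp F D.

End Apolarity.

Section Star.
Variable (C : fieldType).

(* The r linear forms l_1..l_r in T_1 are
   the rows of L (l_i(v) = sum_j L i j * v j); any n+1 of them are linearly
   independent (this presupposes r >= n+1).  For every n-subset S of the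
   forms, pt S is (a representative of) the point where the hyperplanes
   {l_i = 0}, i in S, meet; X is the set of these binom(r,n) points. *)
Definition star_config (n r : nat) (X : ('I_n.+1 -> C) -> Prop) : Prop :=
  exists L : 'M[C]_(r, n.+1),
    (n.+1 <= r)%N /\
    (forall f : 'I_n.+1 -> 'I_r, injective f -> row_free (rowsub f L)) /\
    exists pt : {set 'I_r} -> 'I_n.+1 -> C,
      (forall S : {set 'I_r}, #|S| = n ->
         (exists j, pt S j != 0) /\
         (forall i, i \in S -> \sum_j L i j * pt S j = 0)) /\
      (forall v, X v <-> exists2 S : {set 'I_r}, #|S| = n & v = pt S).

Definition has_apolar_star (n r : nat) (F : {mpoly C[n.+1]}) : Prop :=
  exists X, @star_config n r X /\ apolar X F.

Definition deg_monomials (n d : nat) : seq 'X_{1..n} :=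
  map val (enum [pred m : 'X_{1..n < d.+1} | mdeg (val m) == d]).

(* "A general form of degree d in n+1 variables has property P": all forms
   in some nonempty Zariski open subset of the space of degree d forms have P.
   The space of degree d forms is identified with C^N, N = binom(d+n,d), via
   the coefficients on the monomials of degree d (enumerated by deg_monomials);
   a nonempty Zariski open set contains a nonempty basic open set
   { G <> 0 } with G a nonzero polynomial in the N coordinates. *)
Definition general_form (n d : nat) (P : {mpoly C[n.+1]} -> Prop) : Prop :=
  exists G : {mpoly C[size (deg_monomials n.+1 d)]}, G != 0 /\
    forall F : {mpoly C[n.+1]}, F \is d.-homog ->
      G.@[fun i => F@_(nth 0%MM (deg_monomials n.+1 d) i)] != 0 -> P F.

End Star.

Arguments star_config {C} n r X.
Arguments has_apolar_star {C} n r F.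
Arguments general_form {C} n d P.

(* Main.v *)
Require Import Defs.
From HB Require Import structures.
From mathcomp Require Import all_boot all_order all_algebra.
From mathcomp Require Import reals complex.
From mathcomp Require Import mpoly.
From mathcomp Require Import zify.
Set Implicit Arguments.
Unset Strict Implicit.
Unset Printing Implicit Defensive.
Import Order.TTheory GRing.Theory Num.Theory.
Local Open Scope ring_scope.

Section A.
Variable (R : numDomainType).

Lemma poly_many_roots (q : {poly R}) K : (size q <= K)%N ->
  (forall i, (i < K)%N -> q.[i%:R] = 0) -> q = 0.
Proof.
move=> hs hr; apply/eqP; apply/negPn/negP => qn0.
have := max_poly_roots qn0 (rs := [seq i%:R | i <- iota 0 K]).
rewrite size_map size_iota.
have -> : all (root q) [seq i%:R | i <- iota 0 K].
  apply/allP => x; case/mapP => i; rewrite mem_iota add0n => /andP [_ hi] ->.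
  by apply/eqP/hr.
have -> : uniq [seq (i%:R : R) | i <- iota 0 K].
  rewrite map_inj_uniq ?iota_uniq // => i j /eqP; rewrite eqr_nat => /eqP //.
by move=> /(_ isT isT); rewrite ltnNge hs.
Qed.
End A.

Section B.
Variable (R : numDomainType).

Definition mtrunc n (m : 'X_{1..n.+1}) : 'X_{1..n} := [multinom m (lift ord_max i) | i < n].
Definition slice n (p : {mpoly R[n.+1]}) k : {mpoly R[n]} :=
  \sum_(m <- msupp p | m ord_max == k) p@_m *: 'X_[mtrunc m].


Lemma mtrunc_inj n (m1 m2 : 'X_{1..n.+1}) :
  m1 ord_max = m2 ord_max -> mtrunc m1 = mtrunc m2 -> m1 = m2.
Proof.
move=> h1 h2; apply/mnmP => i; case: (unliftP ord_max i) => [j ->|->] //.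
by have := congr1 (fun m : 'X_{1..n} => m j) h2; rewrite !mnmE.
Qed.

Lemma slice_coef n (p : {mpoly R[n.+1]}) m :
  (slice p (m ord_max))@_(mtrunc m) = p@_m.
Proof.
rewrite /slice raddf_sum /=.
under eq_bigr do rewrite mcoeffZ mcoeffX.
case: (boolP (m \in msupp p)) => hm.
  rewrite big_mkcond /= (bigD1_seq m) ?msupp_uniq //= !eqxx mulr1 big1 ?addr0 //.
  move=> m' hne; case: eqP => [hmax|//].
  case: eqP => [heq|]; last by rewrite mulr0.
  by move: hne; rewrite (mtrunc_inj hmax heq) eqxx.
rewrite (memN_msupp_eq0 hm) big_seq_cond big1 // => m' /andP [hm' /eqP hmax].
case: eqP => [heq|]; last by rewrite mulr0.
by move: hm; rewrite -(mtrunc_inj hmax heq) hm'.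
Qed.

Lemma widen_lift n (j : 'I_n) : widen_ord (leqnSn n) j = lift ord_max j.
Proof. by apply/val_inj; rewrite /= /bump leqNgt ltn_ord. Qed.

Lemma mdeg_ge n (m : 'X_{1..n}) i : (m i <= mdeg m)%N.
Proof. by rewrite mdegE (bigD1 i) //= leq_addr. Qed.

Lemma meval_slice n (p : {mpoly R[n.+1]}) v K : (msize p <= K)%N ->
  p.@[v] = \sum_(k < K) (slice p k).@[fun i => v (lift ord_max i)] * v ord_max ^+ k.
Proof.
move=> hK; rewrite mevalE.
rewrite (eq_bigr (fun k : 'I_K => \sum_(m <- msupp p) if m ord_max == k then p@_m * \prod_i v i ^+ m i else 0)); last first.
  move=> k _; rewrite /slice raddf_sum mulr_suml /= big_mkcond /=; apply: eq_bigr => m _.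
  case: eqP => [hk|] //.
  rewrite mevalZ mevalX -mulrA; congr (_ * _).
  rewrite big_ord_recr /= hk; congr (_ * _); apply: eq_bigr => i _; rewrite mnmE widen_lift //.
rewrite exchange_big /=; apply: eq_big_seq => m hm.
rewrite -big_mkcond /=.
rewrite (eq_bigl (fun k : 'I_K => k == m ord_max :> nat)); last by move=> k; rewrite eq_sym.
rewrite (big_ord1_eq _ (fun _ => p@_m * \prod_i v i ^+ m i)).
have -> : (m ord_max < K)%N.
  by apply: leq_ltn_trans (mdeg_ge m ord_max) _; apply: leq_trans (msize_mdeg_lt hm) hK.
by [].
Qed.

Lemma meval_zero n (p : {mpoly R[n]}) : (forall v, p.@[v] = 0) -> p = 0.
Proof.
elim: n p => [|n IH] p hp.
  by rewrite (nvar0_mpolyC p); move: (hp (fun _ => 0)); rewrite {1}(nvar0_mpolyC p) mevalC => ->.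
apply/mpolyP => m; rewrite mcoeff0.
case: (boolP (m \in msupp p)) => hm; last by rewrite (memN_msupp_eq0 hm).
rewrite -slice_coef.
have hlt : (m ord_max < msize p)%N by apply: leq_ltn_trans (mdeg_ge m ord_max) (msize_mdeg_lt hm).
suff -> : slice p (m ord_max) = 0 by rewrite mcoeff0.
apply: IH => v'.
pose ext (t : R) : 'I_n.+1 -> R := fun i => if unlift ord_max i is Some j then v' j else t.
pose q := \poly_(k < msize p) (slice p k).@[v'].
have hq : q = 0.
  apply: (@poly_many_roots _ q (msize p)); first exact: size_poly.
  move=> i _; rewrite horner_poly -[RHS](hp (ext i%:R)) (meval_slice (ext i%:R) (leqnn _)).
  apply: eq_bigr => k _; congr (_ * _).
    by apply: meval_eq => j; rewrite /ext liftK.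
  by rewrite /ext unlift_none.
have := congr1 (fun q : {poly R} => q`_(m ord_max)) hq.
by rewrite coef_poly hlt coef0.
Qed.
End B.

Section C.
Variable (F : fieldType).

Definition bnd n (p : {mpoly F[n]}) D := forall m, m \in msupp p -> (mdeg m <= D)%N.

Lemma bndM n (p q : {mpoly F[n]}) a b : bnd p a -> bnd q b -> bnd (p * q) (a + b).
Proof.
move=> hp hq m /msuppM_le /allpairsP [[m1 m2] [/= h1 h2 ->]].
by rewrite mdegD leq_add // ?hp ?hq.
Qed.

Lemma bnd1 n : bnd (1 : {mpoly F[n]}) 0.
Proof. by move=> m; rewrite msupp1 inE => /eqP ->; rewrite mdeg0. Qed.

Lemma bndX n (p : {mpoly F[n]}) a e : bnd p a -> bnd (p ^+ e) (e * a).
Proof.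
move=> hp; elim: e => [|e IH]; first by rewrite expr0 mul0n; apply: bnd1.
by rewrite exprS mulSn; apply: bndM.
Qed.

Lemma bnd_prod n N (P : 'I_N -> {mpoly F[n]}) (a : 'I_N -> nat) D :
  (forall i, bnd (P i) D) -> bnd (\prod_(i < N) P i ^+ a i) (\sum_(i < N) a i * D).
Proof.
move=> hP; rewrite /index_enum; elim: (Finite.enum _) => [|i s IH].
  by rewrite !big_nil; apply: bnd1.
by rewrite !big_cons; apply: bndM => //; apply: bndX.
Qed.

Lemma bnd_msize n (p : {mpoly F[n]}) : bnd p (msize p).
Proof. by move=> m /msize_mdeg_lt /ltnW. Qed.

Lemma card_ineq N k d B : (k < N)%N -> B = ((N * d).+1 ^ k).+1 ->
  ((N * B * d).+1 ^ k < B ^ N)%N.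
Proof.
move=> hkN hBdef.
have hB : (0 < B)%N by rewrite hBdef.
have h1 : ((N * B * d).+1 <= B * (N * d).+1)%N.
  nia.
apply: (@leq_ltn_trans ((B * (N * d).+1) ^ k)); first by case: (k) => [|k']; rewrite ?expn0 // leq_exp2r.
rewrite expnMn.
apply: (@leq_trans (B ^ k * B)).
  by rewrite ltn_pmul2l ?expn_gt0 ?hB // hBdef.
by rewrite -expnSr leq_pexp2l.
Qed.

Lemma alg_dep k N (P : 'I_N -> {mpoly F[k]}) : (k < N)%N ->
  exists G : {mpoly F[N]}, G != 0 /\ forall x, G.@[fun i => (P i).@[x]] = 0.
Proof.
move=> hkN.
pose d := \max_(i < N) msize (P i).
have hPd i : bnd (P i) d.
  by move=> m hm; apply: leq_trans (bnd_msize hm) _; apply: (leq_bigmax_cond (F := fun i => msize (P i))).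
pose B := ((N * d).+1 ^ k).+1.
pose T := (N * B * d).+1.
pose lq := [tuple P i | i < N].
pose mA (a : {ffun 'I_N -> 'I_B}) : 'X_{1..N} := [multinom (a i : nat) | i < N].
pose mB (b : {ffun 'I_k -> 'I_T}) : 'X_{1..k} := [multinom (b i : nat) | i < k].
pose Q a := 'X_[mA a] \mPo lq.
have hQ a : Q a = \prod_(i < N) P i ^+ a i.
  by rewrite /Q comp_mpolyX; apply: eq_bigr => i _; rewrite tnth_mktuple mnmE.
pose Mx : 'M[F]_(#|{ffun 'I_N -> 'I_B}|, #|{ffun 'I_k -> 'I_T}|) :=
  \matrix_(x, y) (Q (enum_val x))@_(mB (enum_val y)).
have hcard : (#|{ffun 'I_k -> 'I_T}| < #|{ffun 'I_N -> 'I_B}|)%N.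
  by rewrite !card_ffun !card_ord; apply: card_ineq.
have hK : kermx Mx != 0.
  rewrite kermx_eq0 /row_free; apply/negP => /eqP h.
  by have := rank_leq_col Mx; rewrite h leqNgt hcard.
have [i hi] : exists i, row i (kermx Mx) != 0.
  case: (pickP (fun i => row i (kermx Mx) != 0)) => [i hi|h]; first by exists i.
  exfalso; move/negP: hK; apply; apply/eqP/row_matrixP => i.
  by move: (h i) => /negbFE/eqP ->; rewrite row0.
set c := row i (kermx Mx) in hi.
have hc : c *m Mx = 0 by apply/eqP; rewrite -sub_kermx row_sub.
have mAinj : injective mA.
  move=> a1 a2 h; apply/ffunP => j; apply/val_inj.
  by have := congr1 (fun m : 'X_{1..N} => m j) h; rewrite /mA !mnmE.
pose G := \sum_(x < #|{ffun 'I_N -> 'I_B}|) c 0 x *: 'X_[mA (enum_val x)].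
exists G; split.
  have [x hx] : exists x, c 0 x != 0.
    case: (pickP (fun x => c 0 x != 0)) => [x hx|h]; first by exists x.
    exfalso; move/negP: hi; apply; apply/eqP/rowP => x.
    by move: (h x) => /negbFE/eqP ->; rewrite mxE.
  apply/negP => /eqP hG; move/negP: hx; apply.
  have := congr1 (mcoeff (mA (enum_val x))) hG.
  rewrite mcoeff0 raddf_sum /= (bigD1 x) //= mcoeffZ mcoeffX eqxx mulr1 big1 ?addr0 => [->//|].
  move=> y hy; rewrite mcoeffZ mcoeffX; case: eqP => [/mAinj/enum_val_inj h|]; last by rewrite mulr0.
  by move: hy; rewrite h eqxx.
have hGP : G \mPo lq = 0.
  apply/mpolyP => m; rewrite mcoeff0 /G (big_morph _ (comp_mpolyD lq) (comp_mpoly0 lq)) raddf_sum /=.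
  under eq_bigr do rewrite comp_mpolyZ mcoeffZ.
  case: (boolP [forall j, (m j < T)%N]) => hm.
    pose b : {ffun 'I_k -> 'I_T} := [ffun j => Ordinal (elimT forallP hm j)].
    have hb : mB b = m by apply/mnmP => j; rewrite mnmE ffunE.
    have := congr1 (fun M : 'M_(1, _) => M 0 (enum_rank b)) hc.
    rewrite !mxE => h; rewrite -[RHS]h; apply: eq_bigr => x _.
    by rewrite [Mx _ _]mxE enum_rankK hb.
  apply: big1 => x _.
  move: hm; rewrite negb_forall => /existsP [j]; rewrite -leqNgt => hj.
  rewrite -/(Q (enum_val x)) memN_msupp_eq0 ?mulr0 //.
  apply/negP => hmQ.
  have := (hQ (enum_val x)) ; move=> eQ; rewrite eQ in hmQ.
  have := bnd_prod (a := fun j0 => (enum_val x j0 : nat)) hPd hmQ.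
  have hs : (\sum_(i < N) enum_val x i * d <= N * B * d)%N.
    apply: (@leq_trans (\sum_(i < N) B * d)).
      by apply: leq_sum => i0 _; rewrite leq_mul2r ltnW ?orbT.
    by rewrite sum_nat_const card_ord mulnA.
  move=> h; have := leq_trans h hs; rewrite leqNgt.
  by move/negP; apply; apply: leq_trans hj (mdeg_ge m j).
move=> x.
have -> : G.@[fun i => (P i).@[x]] = (G \mPo lq).@[x].
  by rewrite comp_mpoly_meval; apply: meval_eq => j; rewrite tnth_mktuple.
by rewrite hGP meval0.
Qed.
End C.

Definition nsub r n := {S : {set 'I_r} | #|S| == n}.
Section D.
Variable (C : numFieldType).

Lemma DM_uniq n d : uniq (deg_monomials n d).
Proof. by rewrite /deg_monomials map_inj_uniq ?enum_uniq //; exact: val_inj. Qed.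

Lemma DM_mem n d m : (m \in deg_monomials n d) = (mdeg m == d).
Proof.
apply/mapP/idP => [[bm]|h].
  by rewrite mem_enum inE => hb ->.
have hlt : (mdeg m < d.+1)%N by rewrite (eqP h).
exists (BMultinom hlt) => //; by rewrite mem_enum inE /=.
Qed.

Lemma DM_size n d : size (deg_monomials n.+1 d) = 'C(d + n, d).
Proof.
rewrite -(size_basis n d); apply: perm_size; apply: uniq_perm.
- exact: DM_uniq.
- exact: uniq_basis.
by move=> m; rewrite DM_mem basis_cover.
Qed.

Definition mfact n (m : 'X_{1..n}) := (\prod_(i < n) (m i)`!)%N.

Lemma diff_coef0 n (D F : {mpoly C[n]}) :
  (diff_act D F)@_0 = \sum_(m <- msupp D) D@_m * (F@_m *+ mfact m).
Proof.
rewrite /diff_act raddf_sum; apply: eq_bigr => m _.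
rewrite /= mcoeffZ mcoeff_mderivm addm0 /mfact; congr (_ * (_ *+ _)).
by apply: eq_bigr => i _; rewrite ffactnn.
Qed.

Lemma sum_msupp_sub n (p : {mpoly C[n]}) (s : seq 'X_{1..n}) (g : 'X_{1..n} -> C) :
  uniq s -> {subset msupp p <= s} ->
  \sum_(m <- msupp p) p@_m * g m = \sum_(m <- s) p@_m * g m.
Proof.
move=> us hsub.
rewrite [RHS](perm_big (msupp p ++ [seq m <- s | m \notin msupp p])) /=; last first.
  apply: uniq_perm => //.
    rewrite cat_uniq msupp_uniq filter_uniq // andbT /=.
    by apply/hasPn => m; rewrite mem_filter => /andP [].
  move=> m; rewrite mem_cat mem_filter.
  by case: (boolP (m \in msupp p)) => h /=; [rewrite (hsub _ h)|].
rewrite big_cat /= [X in _ = _ + X]big1_seq ?addr0 // => m /andP [_].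
by rewrite mem_filter => /andP [/memN_msupp_eq0 -> _]; rewrite mul0r.
Qed.

Lemma homog_sumX n d N (c : 'I_N -> C) (ms : 'I_N -> 'X_{1..n}) :
  (forall i, mdeg (ms i) = d) -> \sum_(i < N) c i *: 'X_[ms i] \is d.-homog.
Proof.
move=> h; apply/dhomogP => m /msupp_sum_le /flattenP [s /mapP [i _ ->]].
by move/msuppZ_le; rewrite msuppX inE => /eqP ->; apply: h.
Qed.


Lemma apolar_span n d r (pt : {set 'I_r} -> 'I_n.+1 -> C) (X : ('I_n.+1 -> C) -> Prop)
  (F : {mpoly C[n.+1]}) :
  (forall v, X v <-> exists2 S : {set 'I_r}, #|S| = n & v = pt S) ->
  apolar X F ->
  exists a : 'rV[C]_(#|{: nsub r n}|),
  forall i : 'I_(size (deg_monomials n.+1 d)),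
    F@_(nth 0%MM (deg_monomials n.+1 d) i) *+ mfact (nth 0%MM (deg_monomials n.+1 d) i) =
    \sum_(s < #|{: nsub r n}|) a 0 s *
       \prod_(j < n.+1) (pt (val (enum_val s)) j) ^+ (nth 0%MM (deg_monomials n.+1 d) i j).
Proof.
move=> hX hap.
set N := size _. set ms := deg_monomials n.+1 d.
set K := #|{: nsub r n}|.
pose mons (i : 'I_N) := nth 0%MM ms i.
have hmons i : mdeg (mons i) = d by apply/eqP; rewrite -DM_mem mem_nth.
pose Mx : 'M[C]_(K, N) :=
  \matrix_(s, i) \prod_(j < n.+1) (pt (val (enum_val s)) j) ^+ (mons i j).
pose u : 'rV[C]_N := \row_i (F@_(mons i) *+ mfact (mons i)).
suff : (u <= Mx)%MS.
  case/submxP => a ha; exists a => i.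
  have := congr1 (fun M : 'rV_N => M 0 i) ha; rewrite !mxE => ->.
  by apply: eq_bigr => s _; rewrite mxE.
apply/negPn/negP => hnot; move: hnot; rewrite submxE => hnot.
have [j hj] : exists j, (u *m cokermx Mx) 0 j != 0.
  case: (pickP (fun j => (u *m cokermx Mx) 0 j != 0)) => [j hj|h]; first by exists j.
  exfalso; move/negP: hnot; apply; apply/eqP/rowP => j.
  by move: (h j) => /negbFE/eqP ->; rewrite mxE.
pose D := \sum_(i < N) cokermx Mx i j *: 'X_[mons i].
have hD : D \is d.-homog by apply: homog_sumX.
have hDc i : D@_(mons i) = cokermx Mx i j.
  rewrite /D raddf_sum (bigD1 i) //= mcoeffZ mcoeffX eqxx mulr1 big1 ?addr0 // => i' hi'.
  rewrite /= mcoeffZ mcoeffX /mons nth_uniq ?DM_uniq //.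
  by case: eqP => [/val_inj h|]; [rewrite h eqxx in hi'|rewrite mulr0].
have hvan : vanishing_ideal X D.
  move=> e v /hX [S hS ->].
  case: (eqVneq d e) => [<-|ne]; last by rewrite (pihomog_ne0 ne hD) meval0.
  rewrite pihomog_dE //.
  have hS' : #|S| == n by rewrite hS.
  pose s0 := enum_rank (exist _ S hS' : nsub r n).
  have := congr1 (fun M : 'M_(K, N) => M s0 j) (mulmx_coker Mx); rewrite !mxE => h; rewrite -[RHS]h.
  rewrite /D raddf_sum; apply: eq_bigr => i _.
  by rewrite /= mevalZ mevalX [Mx _ _]mxE enum_rankK /= mulrC.
have happ : diff_act D F = 0 := hap D hvan.
have := congr1 (mcoeff 0%MM) happ; rewrite mcoeff0 diff_coef0.
rewrite (sum_msupp_sub _ (DM_uniq n.+1 d)); last first.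
  by move=> m hm; rewrite DM_mem; apply/eqP; apply: (dhomog_mf hD).
rewrite (big_nth 0%MM) big_mkord => h; move/negP: hj; apply; apply/eqP.
rewrite -[RHS]h mxE; apply: eq_bigr => i _; rewrite [u _ _]mxE.
by rewrite -/(mons i) hDc mulrC.
Qed.
End D.

Section E.

Definition sel r (x0 : 'I_r) n (S : {set 'I_r}) (t : 'I_n) : 'I_r := nth x0 (enum S) t.

Definition Mrow (R : pzRingType) r (x0 : 'I_r) n (L : 'M[R]_(r, n.+1)) (S : {set 'I_r})
  (y : 'I_n.+1 -> R) : 'M[R]_n.+1 :=
  \matrix_(t, c) if unlift ord_max t is Some t' then L (sel x0 S t') c else y c.

Definition wvec (R : pzRingType) r (x0 : 'I_r) n (L : 'M[R]_(r, n.+1)) S (c : 'I_n.+1) : R :=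
  \det (Mrow x0 L S (fun c' => (c' == c)%:R)).

Lemma Mrow_cof (R : comPzRingType) r x0 n (L : 'M[R]_(r, n.+1)) S y y' c :
  cofactor (Mrow x0 L S y) ord_max c = cofactor (Mrow x0 L S y') ord_max c.
Proof.
rewrite /cofactor; congr (_ * \det _); apply/matrixP => t c'.
by rewrite !mxE liftK.
Qed.

Lemma det_Mrow (R : comPzRingType) r x0 n (L : 'M[R]_(r, n.+1)) S y :
  \det (Mrow x0 L S y) = \sum_c y c * wvec x0 L S c.
Proof.
rewrite (expand_det_row _ ord_max); apply: eq_bigr => c _.
rewrite mxE unlift_none; congr (_ * _).
rewrite /wvec (expand_det_row _ ord_max) (bigD1 c) //= big1 ?addr0.
  by rewrite mxE unlift_none eqxx mul1r; apply: Mrow_cof.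
by move=> c' hc'; rewrite mxE unlift_none (negbTE hc') mul0r.
Qed.

Lemma wvec_map (R R' : comPzRingType) (f : {rmorphism R -> R'}) r x0 n
  (L : 'M[R]_(r, n.+1)) S c :
  f (wvec x0 L S c) = wvec x0 (map_mx f L) S c.
Proof.
rewrite /wvec -det_map_mx; congr (\det _); apply/matrixP => t c'.
rewrite !mxE; case: (unlift _ _) => [t'|]; first by rewrite mxE.
by case: eqP; rewrite ?rmorph1 ?rmorph0.
Qed.

Lemma sel_mem r x0 n (S : {set 'I_r}) (t : 'I_n) : #|S| = n -> sel x0 S t \in S.
Proof. by move=> hS; rewrite /sel -mem_enum mem_nth // -cardE hS. Qed.

Lemma sel_inj r x0 n (S : {set 'I_r}) : #|S| = n -> injective (@sel r x0 n S).
Proof.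
move=> hS t1 t2 /eqP; rewrite /sel nth_uniq ?enum_uniq // -?cardE ?hS //.
by move/eqP/val_inj.
Qed.

Variable (C : fieldType).

Lemma kernel_line r x0 n (L : 'M[C]_(r, n.+1)) (S : {set 'I_r}) i0 (p : 'I_n.+1 -> C) :
  #|S| = n -> Mrow x0 L S (fun c => L i0 c) \in unitmx ->
  (forall i, i \in S -> \sum_c L i c * p c = 0) ->
  exists lam, forall c, p c = lam * wvec x0 L S c.
Proof.
move=> hS hA hp.
set A := Mrow x0 L S (fun c => L i0 c).
pose pc : 'cV[C]_n.+1 := \col_c p c.
pose wc : 'cV[C]_n.+1 := \col_c wvec x0 L S c.
pose al := \sum_c L i0 c * p c.
have hdet : \det A != 0 by move: hA; rewrite unitmxE unitfE.
exists (al / \det A).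
suff : pc = (al / \det A) *: wc.
  by move=> h c; have := congr1 (fun M : 'cV_n.+1 => M c 0) h; rewrite !mxE.
suff e : A *m pc = A *m ((al / \det A) *: wc) by rewrite -(mulKmx hA pc) e mulKmx.
apply/matrixP => t z; rewrite ord1 -scalemxAr !mxE.
under eq_bigr do rewrite !mxE.
under [X in _ = _ * X]eq_bigr do rewrite !mxE.
case: (unliftP ord_max t) => [t' ht|ht] /=.
  rewrite hp ?sel_mem //.
  have -> : \sum_j L (sel x0 S t') j * wvec x0 L S j = \det (Mrow x0 L S (fun c => L (sel x0 S t') c)).
    by rewrite det_Mrow.
  rewrite (@determinant_alternate _ _ (Mrow x0 L S (fun c => L (sel x0 S t') c)) (lift ord_max t') ord_max) ?mulr0 //.
    by rewrite eq_sym neq_lift.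
  by move=> c; rewrite !mxE liftK unlift_none.
rewrite -/al.
have -> : \sum_j L i0 j * wvec x0 L S j = \det A by rewrite det_Mrow.
by rewrite mulfVK.
Qed.
End E.

Lemma ff3 m : ('C(m.+3, 3) * 6 = m.+3 * m.+2 * m.+1)%N.
Proof. by rewrite (bin_ffact m.+3 3) /= !ffactnS ffactn0 /= muln1 mulnA. Qed.

Lemma ff4 m : ('C(m.+4, 4) * 24 = m.+4 * m.+3 * m.+2 * m.+1)%N.
Proof. by rewrite (bin_ffact m.+4 4) /= !ffactnS ffactn0 /= muln1 !mulnA. Qed.

Lemma binC a b : 'C(a + b, a) = 'C(a + b, b).
Proof. by rewrite -(bin_sub (leq_addl a b)) addnK. Qed.

Lemma keyQ m d : (5 <= m)%N -> (3 <= d)%N -> ((d + m) * (m + 2) <= 'C(d + m, m))%N.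
Proof.
case: m => // m' hm; elim: d => // d IH hd.
case: (ltnP d 3) => h3.
  have -> : d = 2 by lia.
  rewrite -binC.
  have := ff3 m'.+1; rewrite !addSn add0n => h6.
  have : ((m'.+4 * (m'.+1 + 2)) * 6 <= 'C(m'.+4, 3) * 6)%N by rewrite h6; nia.
  by rewrite leq_pmul2r.
have IH' := IH h3.
rewrite addSn addnS binS.
have h2 : (m'.+3 <= 'C((d + m').+1, m'))%N.
  have : ('C(m'.+4, m') <= 'C((d + m').+1, m'))%N by apply: leq_bin2l; lia.
  have e4 : 'C(m'.+4, m') = 'C(m'.+4, 4) by rewrite -(addn4 m') -binC.
  rewrite e4; have := ff4 m' => h24 hle.
  apply: leq_trans hle.
  have : (m'.+3 * 24 <= 'C(m'.+4, 4) * 24)%N by rewrite h24; nia.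
  by rewrite leq_pmul2r.
rewrite addnS in IH'.
nia.
Qed.

Lemma count_ineq n d r : (3 <= d)%N -> (6 <= n)%N -> (r < d + n)%N ->
  ((r * n.+1).-1 + 'C(r, n) < 'C(d + n, d))%N.
Proof.
move=> hd hn hr.
case: n hn hr => // m hm hr.
have hQ := keyQ (m := m) (d := d) hm hd.
rewrite binC addnS binS.
have h1 : ('C(r, m.+1) <= 'C(d + m, m.+1))%N by apply: leq_bin2l; lia.
have h2 : (r * m.+2 <= (d + m) * (m + 2))%N by rewrite addn2; apply: leq_mul; lia.
lia.
Qed.

Definition LtT r' n (j0 : 'I_n.+1) := {p : 'I_r'.+1 * 'I_n.+1 | p != (ord0, j0)}.
Arguments LtT : clear implicits.
Definition VtT r' n (j0 : 'I_n.+1) := (LtT r' n j0 + nsub r'.+1 n)%type.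
Arguments VtT : clear implicits.
Section P1.
Variable (C : numFieldType).

Lemma card_VtT r' n (j0 : 'I_n.+1) :
  #|{: VtT r' n j0}| = ((r'.+1 * n.+1).-1 + 'C(r'.+1, n))%N.
Proof.
rewrite card_sum !card_sig; congr (_ + _)%N.
  by rewrite cardC1 card_prod !card_ord.
rewrite -[X in 'C(X, _)](card_ord r'.+1) -card_draws; apply: eq_card => S.
by rewrite !inE.
Qed.

Lemma chart d n r' (j0 : 'I_n.+1) :
  ((r'.+1 * n.+1).-1 + 'C(r'.+1, n) < size (deg_monomials n.+1 d))%N ->
  exists G : {mpoly C[size (deg_monomials n.+1 d)]}, G != 0 /\
  forall (F : {mpoly C[n.+1]}) (L : 'M[C]_(r'.+1, n.+1))
         (pt : {set 'I_r'.+1} -> 'I_n.+1 -> C) (X : ('I_n.+1 -> C) -> Prop),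
    (n.+1 <= r'.+1)%N ->
    (forall f : 'I_n.+1 -> 'I_r'.+1, injective f -> row_free (rowsub f L)) ->
    (forall S : {set 'I_r'.+1}, #|S| = n ->
       (exists j, pt S j != 0) /\ (forall i, i \in S -> \sum_j L i j * pt S j = 0)) ->
    (forall v, X v <-> exists2 S : {set 'I_r'.+1}, #|S| = n & v = pt S) ->
    L ord0 j0 != 0 ->
    apolar X F ->
    G.@[fun i => F@_(nth 0%MM (deg_monomials n.+1 d) i)] = 0.
Proof.
move=> hcount.
set N := size _. set ms := deg_monomials n.+1 d.
pose mons (i : 'I_N) := nth 0%MM ms i.
have hmons i : mdeg (mons i) = d by apply/eqP; rewrite -DM_mem mem_nth.
pose K := #|{: VtT r' n j0}|.
have hK : (K < N)%N by rewrite /K card_VtT.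
pose var (v : VtT r' n j0) : {mpoly C[K]} := 'X_(enum_rank v).
pose Lpoly : 'M[{mpoly C[K]}]_(r'.+1, n.+1) :=
  \matrix_(i, c) match (insub (i, c) : option (LtT r' n j0)) with
                 | Some p => var (inl p) | None => 1 end.
pose Ppoly (i : 'I_N) : {mpoly C[K]} := ((mfact (mons i))%:R)^-1 *:
  \sum_(S : nsub r'.+1 n) var (inr S) *
     \prod_(j < n.+1) (wvec ord0 Lpoly (val S) j) ^+ (mons i j).
have [G [hG0 hGP]] := alg_dep Ppoly hK.
exists G; split => //.
move=> F L pt X hr hL hpt hX hj0 hap.
pose mu : 'rV[C]_r'.+1 := \row_i (if i == ord0 then (L ord0 j0)^-1 else 1).
pose L' := diag_mx mu *m L.
have hL'e i c : L' i c = mu 0 i * L i c by rewrite /L' mul_diag_mx mxE.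
clearbody L'.
have hmu i : mu 0 i != 0.
  by rewrite mxE; case: ifP => _; [rewrite invr_eq0 | rewrite oner_eq0].
have hL'0 : L' ord0 j0 = 1 by rewrite hL'e mxE eqxx mulVf.
have hL' f : injective f -> rowsub f L' \in unitmx.
  move=> hf.
  have -> : rowsub f L' = diag_mx (\row_t mu 0 (f t)) *m rowsub f L.
    by apply/matrixP => t c; rewrite mul_diag_mx [LHS]mxE hL'e !mxE.
  rewrite unitmx_mul -[rowsub f L \in unitmx]row_free_unit hL // andbT unitmxE det_diag unitfE.
  by apply/prodf_neq0 => t _; rewrite mxE hmu.
have [a ha] := apolar_span d hX hap.
have hlam : forall S : nsub r'.+1 n, exists lam : C,
    forall c, pt (val S) c = lam * wvec ord0 L' (val S) c.
  move=> [S hS] /=; have hS' : #|S| = n by apply/eqP.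
  have [i0 hi0] : exists i0, i0 \notin S.
    case: (pickP (fun i => i \notin S)) => [i hi|h]; first by exists i.
    exfalso.
    have : [set: 'I_r'.+1] \subset S by apply/subsetP => i _; move: (h i) => /negbFE.
    move/subset_leq_card; rewrite cardsT card_ord hS' => hle.
    by move: (leq_trans hr hle); rewrite ltnn.
  pose f (t : 'I_n.+1) := if unlift ord_max t is Some t' then sel ord0 S t' else i0.
  apply: (kernel_line (x0 := ord0) (i0 := i0) hS').
    have -> : Mrow ord0 L' S (fun c => L' i0 c) = rowsub f L'.
      by apply/matrixP => t c; rewrite !mxE /f; case: (unlift _ _).
    apply: hL' => t1 t2; rewrite /f.
    case: (unliftP ord_max t1) => [t1' ->|->]; case: (unliftP ord_max t2) => [t2' ->|->] //.
    - by move/(sel_inj hS') => ->.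
    - by move=> h; have := sel_mem ord0 t1' hS'; rewrite h (negbTE hi0).
    - by move=> h; have := sel_mem ord0 t2' hS'; rewrite -h (negbTE hi0).
  move=> i hi.
  under eq_bigr do rewrite hL'e -mulrA.
  by rewrite -mulr_sumr ((hpt S hS').2 i hi) mulr0.
have [lam hlamf] := fin_all_exists hlam.
pose xv (v : VtT r' n j0) : C :=
  match v with inl p => L' (val p).1 (val p).2 | inr Sx => a 0 (enum_rank Sx) * lam Sx ^+ d end.
pose x (k : 'I_K) := xv (enum_val k).
have hvar v : (var v).@[x] = xv v by rewrite mevalXU /x enum_rankK.
have hLmap : map_mx (meval x) Lpoly = L'.
  apply/matrixP => i c; rewrite !mxE.
  case: insubP => [p hp hv|hn]; first by rewrite hvar /= hv.
  move: hn; rewrite negbK => /eqP [-> ->]; by rewrite meval1 hL'0.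
have hw S c : (wvec ord0 Lpoly S c).@[x] = wvec ord0 L' S c.
  by rewrite (wvec_map (meval x)) hLmap.
have hGx := hGP x.
rewrite -[RHS]hGx; apply: meval_eq => i.
rewrite /Ppoly mevalZ raddf_sum /=.
under eq_bigr do rewrite mevalM hvar rmorph_prod.
rewrite (reindex (fun s : 'I_#|{: nsub r'.+1 n}| => enum_val s)) /=; last by apply: onW_bij; exists enum_rank => s; [exact: enum_valK | exact: enum_rankK].
have hF := ha i; rewrite -/(mons i) in hF.
have hf0 : (mfact (mons i))%:R != 0 :> C.
  by rewrite pnatr_eq0 -lt0n /mfact prodn_gt0 // => j; rewrite fact_gt0.
apply: (mulfI hf0); rewrite mulrA mulfV // mul1r mulr_natl hF.
apply: eq_bigr => s _; rewrite /= enum_valK -mulrA; congr (_ * _).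
have hl := hlamf (enum_val s); simpl in hl.
under eq_bigr do rewrite hl exprMn.
rewrite big_split /= prodrXr -mdegE hmons; congr (_ * _).
by apply: eq_bigr => j _; rewrite rmorphXn /= hw.
Qed.

Lemma part1 d n r : (3 <= d)%N -> (6 <= n)%N -> (r < d + n)%N ->
  general_form n d (fun F : {mpoly C[n.+1]} => ~ has_apolar_star n r F).
Proof.
move=> hd hn hr.
case: r hr => [|r'] hr.
  exists 1; split; first exact: oner_neq0.
  by move=> F _ _ [X [[L [hr0 _]] _]].
have hcount : ((r'.+1 * n.+1).-1 + 'C(r'.+1, n) < size (deg_monomials n.+1 d))%N.
  by rewrite DM_size; apply: count_ineq.
have [Gs hGs] := fin_all_exists (fun j0 : 'I_n.+1 => @chart d n r' j0 hcount).
exists (\prod_j0 Gs j0); split.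
  by apply/prodf_neq0 => j0 _; case: (hGs j0).
move=> F hF hne [X [[L [hr1 [hL [pt [hpt hX]]]]] hap]].
have [j0 hj0] : exists j0, L ord0 j0 != 0.
  case: (pickP (fun j0 => L ord0 j0 != 0)) => [j hj|h]; first by exists j.
  exfalso.
  pose f (t : 'I_n.+1) := widen_ord hr1 t.
  have hf : injective f by move=> t1 t2 /(congr1 val) /= /val_inj.
  have := hL f hf => hfree.
  have h0 : row ord0 (rowsub f L) = 0.
    apply/rowP => j; rewrite !mxE.
    have -> : f ord0 = ord0 by apply/val_inj.
    by move: (h j) => /negbFE/eqP.
  move: h0; rewrite rowE => /eqP.
  rewrite (mulmx_free_eq0 _ hfree) => /eqP /matrixP /(_ 0 ord0).
  by rewrite !mxE eqxx /= => /eqP; rewrite oner_eq0.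
move/negP: hne; apply; rewrite rmorph_prod /= prodf_seq_eq0.
apply/hasP; exists j0; first exact: mem_index_enum.
by rewrite /= ((hGs j0).2 F L pt X hr1 hL hpt hX hj0 hap).
Qed.
End P1.

Section P2a.
Variable (C : numFieldType).

Lemma meval_homog_scale n (Q : {mpoly C[n]}) e c v :
  Q \is e.-homog -> Q.@[fun j => c * v j] = c ^+ e * Q.@[v].
Proof.
move=> hQ; rewrite !mevalE mulr_sumr; apply: eq_big_seq => m hm.
rewrite mulrCA; congr (_ * _).
under eq_bigr do rewrite exprMn.
by rewrite big_split /= prodrXr -mdegE (dhomog_mf hQ hm).
Qed.

Definition psz (p : {poly C}) D := (size p <= D.+1)%N.

Lemma pszM p q a b : psz p a -> psz q b -> psz (p * q) (a + b).
Proof.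
rewrite /psz => hp hq; apply: leq_trans (size_polyMleq p q) _.
lia.
Qed.

Lemma pszX p a k : psz p a -> psz (p ^+ k) (k * a).
Proof.
move=> hp; elim: k => [|k IH]; first by rewrite expr0 /psz size_poly1.
by rewrite exprS mulSn; apply: pszM.
Qed.

Lemma psz_prod N (f : 'I_N -> {poly C}) (k : 'I_N -> nat) a :
  (forall j, psz (f j) a) -> psz (\prod_(j < N) f j ^+ k j) (\sum_(j < N) k j * a).
Proof.
move=> hf; rewrite /index_enum; elim: (Finite.enum _) => [|j s IH].
  by rewrite !big_nil /psz size_poly1.
by rewrite !big_cons; apply: pszM => //; apply: pszX.
Qed.

Lemma line_poly n (Q : {mpoly C[n]}) e (u w : 'I_n -> C) : (msize Q <= e.+1)%N ->
  exists lp : {poly C}, (size lp <= e.+1)%N /\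
    forall t, lp.[t] = Q.@[fun j => u j + w j * t].
Proof.
move=> hQ.
exists (\sum_(m <- msupp Q) Q@_m *: \prod_(j < n) ((w j)%:P * 'X + (u j)%:P) ^+ (m j)).
split.
  apply: leq_trans (size_sum _ _ _) _.
  apply/bigmax_leqP_seq => m hm _.
  apply: leq_trans (size_scale_leq _ _) _.
  have h1 : forall j, psz ((w j)%:P * 'X + (u j)%:P) 1.
    move=> j; rewrite /psz size_MXaddC; case: ifP => // _; rewrite ltnS size_polyC.
    by case: (w j != 0).
  have := psz_prod (fun j => m j) h1; rewrite /psz.
  move=> h; apply: leq_trans h _; rewrite ltnS.
  under eq_bigr do rewrite muln1.
  by rewrite -mdegE -ltnS; apply: leq_trans (msize_mdeg_lt hm) hQ.
move=> t; rewrite horner_sum mevalE; apply: eq_bigr => m _.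
rewrite hornerZ horner_prod; congr (_ * _); apply: eq_bigr => j _.
by rewrite horner_exp hornerD hornerCM hornerX hornerC addrC.
Qed.
End P2a.

Section P2b.
Variable (C : numClosedFieldType).

Definition PS r (a : 'I_r -> C) (S : {set 'I_r}) : {poly C} := \prod_(i in S) ('X - (a i)%:P).

Lemma KL n r e (a : 'I_r -> C) (Q : {mpoly C[n.+1]}) :
  injective a -> Q \is e.-homog -> (e + n <= r)%N ->
  (forall S : {set 'I_r}, #|S| = n -> Q.@[fun j => (PS a S)`_j] = 0) -> Q = 0.
Proof.
move=> ha hQ her hS.
have hmsz : (msize Q <= e.+1)%N.
  by rewrite msizeE; apply/bigmax_leqP_seq => m hm _; rewrite (dhomog_mf hQ hm).
pose fQ (x : 'I_n -> C) := Q.@[fun j : 'I_n.+1 => (\prod_(k < n) ('X - (x k)%:P))`_j].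
have P0 : forall x (s : 'I_n -> 'I_r), (forall j, x j = a (s j)) -> injective s -> fQ x = 0.
  move=> x s hx hs.
  have hc : #|[set s j | j in [set: 'I_n]]| = n by rewrite card_imset // cardsT card_ord.
  have hp : \prod_(k < n) ('X - (x k)%:P) = PS a [set s j | j in [set: 'I_n]].
    rewrite /PS big_imset /=; last by move=> ? ? _ _; apply: hs.
    symmetry; rewrite (eq_bigl xpredT) => [|k]; last by rewrite inE.
    by apply: eq_bigr => k _; rewrite hx.
  by rewrite /fQ hp; apply: hS.
have Pk : forall k, (k <= n)%N -> forall x (s : 'I_n -> 'I_r),
    (forall j : 'I_n, (k <= j)%N -> x j = a (s j)) ->
    {in [pred j : 'I_n | (k <= j)%N] &, injective s} -> fQ x = 0.
  elim => [|k IH] hk x s hx hs.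
    by apply: (P0 x s) => [j|j1 j2]; [exact: hx | apply: hs].
  pose kk := Ordinal hk.
  pose B := [set s j | j in [set j : 'I_n | (k < j)%N]].
  have hB : (#|B| <= n.-1)%N.
    apply: leq_trans (leq_imset_card _ _) _.
    rewrite -[n in (_ <= n.-1)%N](card_ord n) -(cardsC1 kk).
    by apply: subset_leq_card; apply/subsetP => j; rewrite !inE => hj; apply/eqP => hjk; rewrite hjk ltnn in hj.
  have hBc : (e < #|~: B|)%N.
    have := cardsCs (~: B); rewrite setCK card_ord => hcs.
    have hBr : (#|~: B| <= r)%N by rewrite -[X in (_ <= X)%N](card_ord r); apply: max_card.
    lia.
  pose h := \prod_(j < n | j != kk) ('X - (x j)%:P).
  have hprod (y : 'I_n -> C) : (forall j, j != kk -> y j = x j) ->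
      \prod_(j < n) ('X - (y j)%:P) = ('X - (y kk)%:P) * h.
    move=> hy; rewrite (bigD1 kk) //=; congr (_ * _).
    by apply: eq_bigr => j hj; rewrite hy.
  have [lp [hlps hlpe]] := line_poly (fun j => ('X * h)`_j) (fun j => - h`_j) hmsz.
  have hlp (y : 'I_n -> C) : (forall j, j != kk -> y j = x j) -> fQ y = lp.[y kk].
    move=> hy; rewrite hlpe /fQ; apply: meval_eq => j.
    rewrite (hprod y hy) mulrBl coefB coefCM.
    by rewrite mulNr; congr (_ - _); apply: mulrC.
  have lp0 : lp = 0.
    apply/eqP; apply/negPn/negP => hne.
    have := max_poly_roots hne (rs := [seq a i | i <- enum (~: B)]).
    rewrite size_map -cardE.
    have -> : uniq [seq a i | i <- enum (~: B)] by rewrite map_inj_uniq ?enum_uniq.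
    have -> : all (root lp) [seq a i | i <- enum (~: B)].
      apply/allP => z; case/mapP => i; rewrite mem_enum => hi ->.
      pose y := fun j => if j == kk then a i else x j.
      have hy : forall j, j != kk -> y j = x j by move=> j hj; rewrite /y (negbTE hj).
      apply/eqP; have := hlp y hy; rewrite /y eqxx => <-.
      apply: (IH (ltnW hk) y (fun j => if j == kk then i else s j)).
        move=> j hj; rewrite /y; case: eqP => // hjk.
        apply: hx; rewrite ltn_neqAle hj andbT; apply/eqP => hkj; apply: hjk; apply/val_inj; by rewrite /= hkj.
      move=> j1 j2; rewrite !inE => hj1 hj2.
      have gt (j : 'I_n) : (k <= j)%N -> j != kk -> (k < j)%N.
        move=> hj hjk; rewrite ltn_neqAle hj andbT; apply/eqP => hkj.
        by move/eqP: hjk; apply; apply/val_inj; rewrite /= hkj.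
      case: (eqVneq j1 kk) => [->|h1]; case: (eqVneq j2 kk) => [->|h2] //.
      - move=> hij; exfalso; move: hi; rewrite in_setC hij => /negP; apply.
        by apply/imsetP; exists j2 => //; rewrite inE gt.
      - move=> hij; exfalso; move: hi; rewrite in_setC -hij => /negP; apply.
        by apply: imset_f; rewrite inE gt.
      by apply: hs; rewrite inE; apply: gt.
    move=> /(_ isT isT) hlt.
    by have := leq_trans hlt hlps; rewrite ltnS leqNgt hBc.
  by rewrite (hlp x) // lp0 horner0.
have hall : forall x, fQ x = 0.
  move=> x; have hnr : (n <= r)%N by apply: leq_trans (leq_addl e n) her.
  apply: (Pk n (leqnn n) x (fun j => widen_ord hnr j)) => [j|j1 j2]; first by rewrite leqNgt ltn_ord.
  by rewrite inE leqNgt ltn_ord.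
have hnz : forall v : 'I_n.+1 -> C, v ord_max != 0 -> Q.@[v] = 0.
  move=> v hv.
  pose p := \poly_(j < n.+1) (v (inord j) / v ord_max).
  have hin : (inord n : 'I_n.+1) = ord_max by apply/val_inj; rewrite /= inordK.
  have hsz : size p = n.+1 by rewrite size_poly_eq //= hin divff ?oner_eq0.
  have hlc : lead_coef p = 1 by rewrite lead_coefE hsz /= coef_poly ltnSn hin divff.
  case: (closed_field_poly_normal p) => rs hrs.
  rewrite hlc scale1r in hrs.
  have hrsz : size rs = n.
    by have := congr1 (fun q : {poly C} => size q) hrs; rewrite size_prod_XsubC hsz => -[].
  pose x (k : 'I_n) := nth 0 rs k.
  have hx : \prod_(k < n) ('X - (x k)%:P) = p.
    rewrite hrs (big_nth 0) hrsz big_mkord //.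
  have := hall x; rewrite /fQ hx => h0.
  have -> : Q.@[v] = Q.@[fun j => v ord_max * (v j / v ord_max)].
    by apply: meval_eq => j; rewrite mulrC divfK.
  have h1 : Q.@[fun j => v j / v ord_max] = 0.
    by rewrite -[RHS]h0; apply: meval_eq => j; rewrite coef_poly ltn_ord inord_val.
  by rewrite (meval_homog_scale _ _ hQ) h1 mulr0.
have hR : 'X_ord_max * Q = 0.
  apply: meval_zero => v; rewrite mevalM mevalXU.
  by case: (eqVneq (v ord_max) 0) => [->|hv]; rewrite ?mul0r // hnz // mulr0.
move/eqP: hR; rewrite mulf_eq0 => /orP [|/eqP //].
move/eqP => h; have := congr1 (mcoeff U_(ord_max)) h.
by rewrite mcoeffX eqxx mcoeff0 => /eqP; rewrite oner_eq0.
Qed.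
End P2b.

Section P2.
Variable (C : numClosedFieldType).

Lemma part2 d n r : (3 <= d)%N -> (d + n <= r)%N ->
  general_form n d (fun F : {mpoly C[n.+1]} => has_apolar_star n r F).
Proof.
move=> hd hr.
exists 1; split; first exact: oner_neq0.
move=> F hF _.
pose a (i : 'I_r) : C := (i : nat)%:R.
have ha : injective a.
  by move=> i j /eqP; rewrite /a eqr_nat => /eqP /val_inj.
pose L : 'M[C]_(r, n.+1) := \matrix_(i, j) a i ^+ j.
pose pt S (j : 'I_n.+1) := (PS a S)`_j.
exists (fun v => exists2 S : {set 'I_r}, #|S| = n & v = pt S); split.
  exists L; split; first lia.
  split.
    move=> f hf; rewrite row_free_unit.
    have -> : rowsub f L = (Vandermonde n.+1 (\row_t a (f t)))^T.
      by apply/matrixP => t c; rewrite !mxE.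
    rewrite unitmx_tr unitmxE det_Vandermonde unitfE.
    apply/prodf_neq0 => i _; apply/prodf_neq0 => j hij; rewrite !mxE subr_eq0.
    apply/eqP => /ha /hf h; by move: hij; rewrite h ltnn.
  exists pt; split; last by [].
  move=> S hS.
  have hPS : PS a S = \prod_(i <- enum S) ('X - (a i)%:P) by rewrite /PS big_enum.
  have hsz : size (PS a S) = n.+1 by rewrite hPS size_prod_XsubC -cardE hS.
  split.
    exists ord_max; rewrite /pt /=.
    have : PS a S \is monic by apply: monic_prod_XsubC.
    move/monicP; rewrite lead_coefE hsz /= => ->; exact: oner_neq0.
  move=> i hi.
  have -> : \sum_j L i j * pt S j = (PS a S).[a i].
    rewrite (horner_coef_wide _ (leqnn _)) hsz; apply: eq_bigr => j _.
    by rewrite !mxE mulrC.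
  by rewrite /PS (bigD1 i) //= hornerM hornerXsubC subrr mul0r.
move=> D hD; rewrite /perp /diff_act.
apply: big1_seq => m /andP [_ hm].
case: (leqP (mdeg m) d) => hmd.
  have hQ : pihomog mdeg (mdeg m) D = 0.
    apply: (KL (a := a) ha (pihomogP _ _ _)); first lia.
    move=> S hS; apply: hD; by exists S.
  suff -> : D@_m = 0 by rewrite scale0r.
  rewrite (pihomog_partitionE (leqnn (msize D))) raddf_sum /=.
  apply: big1 => e _.
  case: (eqVneq (e : nat) (mdeg m)) => [->|ne]; first by rewrite hQ mcoeff0.
  by apply: dhomog_nemf_coeff (pihomogP _ _ _) _; rewrite eq_sym.
suff -> : F^`M[m] = 0 by rewrite scaler0.
apply/mpolyP => m'; rewrite mcoeff_mderivm mcoeff0 (dhomog_nemf_coeff hF) ?mul0rn //.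
apply/eqP => h; have : (mdeg m <= mdeg (m + m')%MM)%N by rewrite mdegD leq_addr.
by rewrite [X in (_ <= X)%N]h leqNgt hmd.
Qed.
End P2.

Unset Implicit Arguments.

Theorem theorem3p3 (R : realType) (d n r : nat) :
  (3 <= d)%N -> (6 <= n)%N ->
  ((r < d + n)%N ->
     general_form n d (fun F : {mpoly (complex R)[n.+1]} => ~ has_apolar_star n r F)) /\
  ((d + n <= r)%N ->
     general_form n d (fun F : {mpoly (complex R)[n.+1]} => has_apolar_star n r F)).
Proof.
move=> hd hn; split => h.
  exact: (@part1 (complex R) d n r hd hn h).
exact: (@part2 (complex R) d n r hd h).
Qed.
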